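(* Let $\alpha$ be a regular cardinal, let $\mathcal{C}$ be a category and let $M\colon \mathcal{C}^{op}\to \mathbf{Set}$ be a functor which is $\alpha$-small and $\alpha$-flat. Then $M$ is Cauchy.
   Context: A functor $M\colon \mathcal{C}^{op}\to\mathbf{Set}$ is $\alpha$-flat if its left Kan extension $\mathrm{Lan}_Y M\colon[\mathcal{C},\mathbf{Set}]\to\mathbf{Set}$ along the Yoneda embedding $Y\colon \mathcal{C}^{op}\to[\mathcal{C},\mathbf{Set}]$ preserves all $\alpha$-small limits (limits of diagrams indexed by categories with fewer than $\alpha$ morphisms); it is Cauchy if $\mathrm{Lan}_Y M$ preserves all small limits. $M$ is $\alpha$-small if $\mathcal{C}$ is essentially $\alpha$-small (equivalent to a category with fewer than $\alpha$ morphisms) and $M$ takes values in $\mathbf{Set}_\alpha$, the sets of cardinality less than $\alpha$. *)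

(* Defs.v *)
From Stdlib Require Import Relations.




Definition card_le (X Y : Type) : Prop :=
  exists f : X -> Y, forall x y, f x = f y -> x = y.
Definition card_lt (X Y : Type) : Prop := card_le X Y /\ ~ card_le Y X.

Definition regular_card (A : Type) : Prop :=
  card_le nat A /\
  forall (I : Type) (X : I -> Type),
    card_lt I A -> (forall i, card_lt (X i) A) -> card_lt {i : I & X i} A.

Record Cat : Type := {
  ob : Type;
  hom : ob -> ob -> Type;
  idm : forall a, hom a a;
  comp : forall {a b c}, hom b c -> hom a b -> hom a c;
  comp_id_l : forall a b (f : hom a b), comp (idm b) f = f;
  comp_id_r : forall a b (f : hom a b), comp f (idm a) = f;
  comp_assoc : forall a b c d (f : hom a b) (g : hom b c) (h : hom c d),
      comp h (comp g f) = comp (comp h g) f }.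
Arguments hom : clear implicits.
Arguments idm {_} _.
Arguments comp {_ _ _ _} _ _.

Definition Mor (C : Cat) : Type := {a : ob C & {b : ob C & hom C a b}}.

Record Functor (D C : Cat) : Type := {
  fo : ob D -> ob C;
  fm : forall {a b}, hom D a b -> hom C (fo a) (fo b);
  fm_id : forall a, fm (idm a) = idm (fo a);
  fm_comp : forall a b c (f : hom D a b) (g : hom D b c),
      fm (comp g f) = comp (fm g) (fm f) }.
Arguments fo {_ _} _ _.
Arguments fm {_ _} _ {_ _} _.

Definition bijective {X Y : Type} (f : X -> Y) : Prop :=
  (forall x y, f x = f y -> x = y) /\ (forall y, exists x, f x = y).

Definition is_iso (C : Cat) (a b : ob C) : Prop :=
  exists (f : hom C a b) (g : hom C b a), comp g f = idm a /\ comp f g = idm b.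

(* C is equivalent to a category with fewer than |A| morphisms:
   there is a fully faithful, essentially surjective functor D -> C from
   a category D with fewer than |A| morphisms. *)
Definition ess_small (A : Type) (C : Cat) : Prop :=
  exists (D : Cat) (G : Functor D C),
    card_lt (Mor D) A /\
    (forall a b, bijective (fun f : hom D a b => fm G f)) /\
    (forall c, exists d, is_iso C (fo G d) c).

Record Psh (C : Cat) : Type := {
  psh_ob : ob C -> Type;
  psh_act : forall {c d}, hom C c d -> psh_ob d -> psh_ob c;
  psh_id : forall c x, psh_act (idm c) x = x;
  psh_comp : forall a b c (f : hom C a b) (g : hom C b c) x,
      psh_act (comp g f) x = psh_act f (psh_act g x) }.
Arguments psh_ob {_} _ _.
Arguments psh_act {_} _ {_ _} _ _.

Record Copsh (C : Cat) : Type := {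
  cop_ob : ob C -> Type;
  cop_act : forall {c d}, hom C c d -> cop_ob c -> cop_ob d;
  cop_id : forall c x, cop_act (idm c) x = x;
  cop_comp : forall a b c (f : hom C a b) (g : hom C b c) x,
      cop_act (comp g f) x = cop_act g (cop_act f x) }.
Arguments cop_ob {_} _ _.
Arguments cop_act {_} _ {_ _} _ _.

Record NatTrans {C : Cat} (F G : Copsh C) : Type := {
  nt : forall c, cop_ob F c -> cop_ob G c;
  nt_nat : forall c d (f : hom C c d) x,
      nt d (cop_act F f x) = cop_act G f (nt c x) }.
Arguments nt {_ _ _} _ _ _.

Record Diagram (J C : Cat) : Type := {
  dg_ob : ob J -> Copsh C;
  dg_map : forall {j k}, hom J j k -> NatTrans (dg_ob j) (dg_ob k);
  dg_id : forall j c x, nt (dg_map (idm j)) c x = x;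
  dg_comp : forall i j k (u : hom J i j) (v : hom J j k) c x,
      nt (dg_map (comp v u)) c x = nt (dg_map v) c (nt (dg_map u) c x) }.
Arguments dg_ob {_ _} _ _.
Arguments dg_map {_ _} _ {_ _} _.

(* ---------- the tensor product  M (x)_C F  (= Lan_Y M evaluated at F) ----
   Elements are triples (c, m, x) with m : M c, x : F c, modulo the
   equivalence relation generated by (d, m, F f x) ~ (c, M f m, x)
   for f : c -> d. *)
Section Tensor.
Variables (C : Cat) (M : Psh C) (F : ob C -> Type)
          (act : forall {c d}, hom C c d -> F c -> F d).

Definition tens_elt : Type := {c : ob C & (psh_ob M c * F c)%type}.

Inductive tens_step : tens_elt -> tens_elt -> Prop :=
| tens_step_intro : forall c d (f : hom C c d) (m : psh_ob M d) (x : F c),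
    tens_step (existT _ d (m, act f x)) (existT _ c (psh_act M f m, x)).

Definition tens_eq : tens_elt -> tens_elt -> Prop :=
  clos_refl_sym_trans tens_elt tens_step.
End Tensor.
Arguments tens_elt {C} M F.
Arguments tens_step {C} M F act _ _.
Arguments tens_eq {C} M F act _ _.

Definition tens_eqc {C : Cat} (M : Psh C) (F : Copsh C) :=
  tens_eq M (cop_ob F) (@cop_act C F).

Definition tens_map {C : Cat} (M : Psh C) {F G : Copsh C} (t : NatTrans F G)
  (e : tens_elt M (cop_ob F)) : tens_elt M (cop_ob G) :=
  match e with existT _ c (m, x) => existT _ c (m, nt t c x) end.

Section Limit.
Variables (J C : Cat) (D : Diagram J C).

Definition lim_ob (c : ob C) : Type :=
  { x : forall j, cop_ob (dg_ob D j) c |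
    forall j k (u : hom J j k), nt (dg_map D u) c (x j) = x k }.

Lemma lim_act_compat (c d : ob C) (f : hom C c d) (x : lim_ob c) :
  forall j k (u : hom J j k),
    nt (dg_map D u) d (cop_act (dg_ob D j) f (proj1_sig x j))
    = cop_act (dg_ob D k) f (proj1_sig x k).
Proof.
  intros j k u. rewrite nt_nat. now rewrite (proj2_sig x j k u).
Qed.

Definition lim_act {c d : ob C} (f : hom C c d) (x : lim_ob c) : lim_ob d :=
  exist _ (fun j => cop_act (dg_ob D j) f (proj1_sig x j))
          (lim_act_compat c d f x).

Definition comparison (M : Psh C) (e : tens_elt M lim_ob) (j : ob J)
  : tens_elt M (cop_ob (dg_ob D j)) :=
  match e with existT _ c (m, x) => existT _ c (m, proj1_sig x j) end.

(* Lan_Y M = M (x)_C - preserves the limit of D: the comparison map from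
   M (x) (lim D) to the limit (in Set) of the diagram j |-> M (x) D j is a
   bijection (surjective onto compatible families, and injective), all
   modulo the defining equivalence relations. *)
Definition preserves_limit (M : Psh C) : Prop :=
  (forall r : forall j, tens_elt M (cop_ob (dg_ob D j)),
     (forall j k (u : hom J j k),
        tens_eqc M (dg_ob D k) (tens_map M (dg_map D u) (r j)) (r k)) ->
     exists e : tens_elt M lim_ob,
       forall j, tens_eqc M (dg_ob D j) (comparison M e j) (r j)) /\
  (forall e e' : tens_elt M lim_ob,
     (forall j, tens_eqc M (dg_ob D j) (comparison M e j) (comparison M e' j)) ->
     tens_eq M lim_ob (@lim_act) e e').
End Limit.
Arguments preserves_limit {J C} D M.

Definition alpha_flat (A : Type) {C : Cat} (M : Psh C) : Prop :=
  forall (J : Cat), card_lt (Mor J) A ->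
  forall D : Diagram J C, preserves_limit D M.

Definition cauchy {C : Cat} (M : Psh C) : Prop :=
  forall (J : Cat) (D : Diagram J C), preserves_limit D M.

Definition alpha_small (A : Type) {C : Cat} (M : Psh C) : Prop :=
  ess_small A C /\ forall c : ob C, card_lt (psh_ob M c) A.

(* Main.v *)
Require Import Defs.
From Stdlib Require Import Relations ProofIrrelevance FunctionalExtensionality IndefiniteDescription.

Lemma sig_eq {X : Type} {P : X -> Prop} (a b : sig P) :
  proj1_sig a = proj1_sig b -> a = b.
Proof. destruct a, b; simpl; intros ->; f_equal; apply proof_irrelevance. Qed.

(* ---------- retracts of representables preserve all limits ---------- *)
Section Retract.
Variables (C : Cat) (M : Psh C) (c0 : ob C) (m0 : psh_ob M c0)
  (s : forall c, psh_ob M c -> hom C c c0)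
  (Hret : forall c m, psh_act M (s c m) m0 = m)
  (Hnat : forall c c' (f : hom C c c') m',
      s c (psh_act M f m') = comp (s c' m') f).

Lemma back (F : ob C -> Type) (act : forall c d, hom C c d -> F c -> F d)
  (e : tens_elt M F) :
  tens_eq M F act e
    (existT _ c0 (m0, act _ _ (s (projT1 e) (fst (projT2 e))) (snd (projT2 e)))).
Proof.
  destruct e as [c [m x]]; simpl.
  apply rst_sym, rst_step.
  pose proof (tens_step_intro C M F act c c0 (s c m) m0 x) as H.
  rewrite Hret in H. exact H.
Qed.

Definition phi (F : Copsh C) (e : tens_elt M (cop_ob F)) : cop_ob F c0 :=
  cop_act F (s (projT1 e) (fst (projT2 e))) (snd (projT2 e)).

Lemma phi_resp F a b : tens_eqc M F a b -> phi F a = phi F b.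
Proof.
  intro H; induction H.
  - destruct H; unfold phi; simpl. rewrite <- cop_comp, Hnat. reflexivity.
  - reflexivity.
  - symmetry; auto.
  - etransitivity; eauto.
Qed.

Lemma idem c m : comp (s c0 m0) (s c m) = s c m.
Proof. rewrite <- Hnat, Hret. reflexivity. Qed.

Lemma phi_fixed F e : cop_act F (s c0 m0) (phi F e) = phi F e.
Proof. unfold phi; rewrite <- cop_comp, idem. reflexivity. Qed.

Lemma eq_of_phi F a b : phi F a = phi F b -> tens_eqc M F a b.
Proof.
  intro H. unfold tens_eqc.
  eapply rst_trans. apply (back _ (@cop_act C F)).
  eapply rst_trans. 2: apply rst_sym, (back _ (@cop_act C F)).
  unfold phi in H. rewrite H. apply rst_refl.
Qed.

Lemma pres_retract (J : Cat) (Dg : Diagram J C) : preserves_limit Dg M.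
Proof.
  split.
  - intros r Hr.
    set (y := fun j => phi (dg_ob Dg j) (r j)).
    assert (Hy : forall j k (u : hom J j k), nt (dg_map Dg u) c0 (y j) = y k).
    { intros j k u. unfold y.
      rewrite <- (phi_resp _ _ _ (Hr j k u)).
      destruct (r j) as [c [m x]]; unfold phi; simpl.
      rewrite <- nt_nat. reflexivity. }
    exists (existT _ c0 (m0, exist _ y Hy)). intro j.
    apply eq_of_phi.
    change (cop_act (dg_ob Dg j) (s c0 m0) (y j) = phi (dg_ob Dg j) (r j)).
    unfold y. apply phi_fixed.
  - intros e e' H.
    assert (HL : lim_act J C Dg (s (projT1 e) (fst (projT2 e))) (snd (projT2 e))
               = lim_act J C Dg (s (projT1 e') (fst (projT2 e'))) (snd (projT2 e'))).
    { apply sig_eq; simpl; apply functional_extensionality_dep; intro j.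
      specialize (H j). apply phi_resp in H.
      destruct e as [c [m x]], e' as [c' [m' x']]. exact H. }
    eapply rst_trans. apply (back _ (@lim_act J C Dg)).
    eapply rst_trans. 2: apply rst_sym, (back _ (@lim_act J C Dg)).
    simpl. rewrite HL. apply rst_refl.
Qed.
End Retract.
Section ElJ.
Variables (C : Cat) (M : Psh C) (D : Cat) (G : Functor D C).
Definition JO := {d : ob D & psh_ob M (fo G d)}.
Definition JH (a b : JO) :=
  {f : hom D (projT1 b) (projT1 a) | psh_act M (fm G f) (projT2 a) = projT2 b}.
Lemma JI_pf (a : JO) : psh_act M (fm G (idm (projT1 a))) (projT2 a) = projT2 a.
Proof. rewrite fm_id, psh_id. reflexivity. Qed.
Definition JI (a : JO) : JH a a := exist _ (idm _) (JI_pf a).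
Lemma JC_pf (a b c : JO) (v : JH b c) (u : JH a b) :
  psh_act M (fm G (comp (proj1_sig u) (proj1_sig v))) (projT2 a) = projT2 c.
Proof.
  destruct u as [fu Hu], v as [fv Hv]; simpl.
  rewrite fm_comp, psh_comp, Hu, Hv. reflexivity.
Qed.
Definition JC (a b c : JO) (v : JH b c) (u : JH a b) : JH a c :=
  exist _ _ (JC_pf a b c v u).
Lemma JC_id_l (a b : JO) (f : JH a b) : JC a b b (JI b) f = f.
Proof. apply sig_eq; simpl. apply comp_id_r. Qed.
Lemma JC_id_r (a b : JO) (f : JH a b) : JC a a b f (JI a) = f.
Proof. apply sig_eq; simpl. apply comp_id_l. Qed.
Lemma JC_assoc (a b c d : JO) (f : JH a b) (g : JH b c) (h : JH c d) :
  JC a c d h (JC a b c g f) = JC a b d (JC b c d h g) f.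
Proof. apply sig_eq; simpl. symmetry; apply comp_assoc. Qed.
Definition JCat : Cat := Build_Cat JO JH JI JC JC_id_l JC_id_r JC_assoc.

Definition Rep (a : ob C) : Copsh C.
Proof.
  refine (Build_Copsh C (fun c => hom C a c) (fun c d f x => comp f x) _ _).
  - intros; apply comp_id_l.
  - intros; symmetry; apply comp_assoc.
Defined.
Definition RepMap (a b : ob C) (h : hom C b a) : NatTrans (Rep a) (Rep b).
Proof.
  refine (Build_NatTrans C (Rep a) (Rep b) (fun c x => comp x h) _).
  intros; simpl; symmetry; apply comp_assoc.
Defined.
Definition Dg : Diagram JCat C.
Proof.
  refine (Build_Diagram JCat C (fun j => Rep (fo G (projT1 j)))
     (fun j k u => RepMap _ _ (fm G (proj1_sig u))) _ _).
  - intros; simpl. rewrite fm_id. apply comp_id_r.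
  - intros; simpl. rewrite fm_comp. apply comp_assoc.
Defined.

Definition TT := {p : Mor D & psh_ob M (fo G (projT1 (projT2 p)))}.
Definition inj (x : Mor JCat) : TT :=
  match x with existT _ a (existT _ b u) =>
    existT _ (existT _ (projT1 b) (existT _ (projT1 a) (proj1_sig u))) (projT2 a) end.
Definition linv (t : TT) : Mor JCat :=
  match t with existT _ (existT _ db (existT _ da f)) ma =>
    existT _ (existT _ da ma : JO)
      (existT _ (existT _ db (psh_act M (fm G f) ma) : JO)
         (exist _ f eq_refl : JH (existT _ da ma) (existT _ db _))) end.
Lemma linv_inj x : linv (inj x) = x.
Proof.
  destruct x as [[da ma] [[db mb] [f pf]]]. simpl in *. destruct pf. reflexivity.
Qed.
Lemma inj_inj x y : inj x = inj y -> x = y.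
Proof. intro H. rewrite <- (linv_inj x), <- (linv_inj y), H. reflexivity. Qed.
End ElJ.
Lemma card_lt_inj (X Y A : Type) (f : X -> Y) :
  (forall x y, f x = f y -> x = y) -> card_lt Y A -> card_lt X A.
Proof.
  intros Hf [[g Hg] Hn]. split.
  - exists (fun x => g (f x)). intros x y H. apply Hf, Hg, H.
  - intros [h Hh]. apply Hn. exists (fun a => f (h a)). intros a b H. apply Hh, Hf, H.
Qed.

Lemma psi_resp (C : Cat) (M : Psh C) (a : ob C) e1 e2 :
  tens_eqc M (Rep C a) e1 e2 ->
  psh_act M (snd (projT2 e1)) (fst (projT2 e1)) = psh_act M (snd (projT2 e2)) (fst (projT2 e2)).
Proof.
  intro H; induction H.
  - destruct H; simpl. apply psh_comp.
  - reflexivity.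
  - symmetry; auto.
  - etransitivity; eauto.
Qed.

Lemma retract_exists (A : Type) (HA : regular_card A) (C : Cat) (M : Psh C)
  (Hsmall : alpha_small A M) (Hflat : alpha_flat A M) :
  exists (c0 : ob C) (m0 : psh_ob M c0) (s : forall c, psh_ob M c -> hom C c c0),
    (forall c m, psh_act M (s c m) m0 = m) /\
    (forall c c' (f : hom C c c') m', s c (psh_act M f m') = comp (s c' m') f).
Proof.
  destruct Hsmall as [[D [G [HcD [Hff Hes]]]] HM].
  assert (Hcard : card_lt (Mor (JCat C M D G)) A).
  { apply (card_lt_inj _ _ _ (inj C M D G)). apply inj_inj.
    apply (proj2 HA). exact HcD. intro; apply HM. }
  destruct (Hflat _ Hcard (Dg C M D G)) as [Hsurj _].
  set (r := fun j : ob (JCat C M D G) =>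
     (existT _ (fo G (projT1 j)) (projT2 j, idm (fo G (projT1 j)))
       : tens_elt M (cop_ob (dg_ob (Dg C M D G) j)))).
  destruct (Hsurj r) as [[c0 [m0 x]] Hx].
  { intros j k u. unfold r. simpl.
    destruct u as [f pf]; simpl.
    rewrite comp_id_l. apply rst_step.
    pose proof (tens_step_intro C M (cop_ob (Rep C (fo G (projT1 k))))
                 (@cop_act C (Rep C (fo G (projT1 k)))) _ _ (fm G f) (projT2 j)
                 (idm _)) as H.
    simpl in H. rewrite comp_id_r, pf in H. exact H. }
  set (X := fun j => proj1_sig x j).
  assert (P1 : forall j, psh_act M (X j) m0 = projT2 j).
  { intro j. pose proof (psi_resp _ _ _ _ _ (Hx j)) as H. simpl in H.
    rewrite psh_id in H. exact H. }
  assert (P2 : forall j k (u : hom (JCat C M D G) j k),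
             comp (X j) (fm G (proj1_sig u)) = X k).
  { intros j k u. exact (proj2_sig x j k u). }
  assert (Hch : forall c, {d : ob D & {i : hom C (fo G d) c & {j : hom C c (fo G d) |
                  comp j i = idm _ /\ comp i j = idm c}}}).
  { intro c. destruct (constructive_indefinite_description _ (Hes c)) as [d Hd].
    unfold is_iso in Hd.
    destruct (constructive_indefinite_description _ Hd) as [i Hi].
    destruct (constructive_indefinite_description _ Hi) as [j Hj].
    exists d, i, j. exact Hj. }
  set (dc := fun c => projT1 (Hch c)).
  set (ic := fun c => projT1 (projT2 (Hch c)) : hom C (fo G (dc c)) c).
  set (jc := fun c => proj1_sig (projT2 (projT2 (Hch c))) : hom C c (fo G (dc c))).
  assert (Hji : forall c, comp (jc c) (ic c) = idm _)
    by (intro c; exact (proj1 (proj2_sig (projT2 (projT2 (Hch c)))))).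
  assert (Hij : forall c, comp (ic c) (jc c) = idm _)
    by (intro c; exact (proj2 (proj2_sig (projT2 (projT2 (Hch c)))))).
  clearbody dc ic jc. clear Hch.
  exists c0, m0.
  exists (fun c m => comp (X (existT _ (dc c) (psh_act M (ic c) m) : JO C M D G)) (jc c)).
  split.
  - intros c m. rewrite psh_comp, P1. simpl. rewrite <- psh_comp, Hij, psh_id. reflexivity.
  - intros c c' f m'.
    set (h := comp (jc c') (comp f (ic c))).
    destruct (proj2 (Hff (dc c) (dc c')) h) as [h' Hh'].
    assert (pf : psh_act M (fm G h') (psh_act M (ic c') m') = psh_act M (ic c) (psh_act M f m')).
    { rewrite Hh'. unfold h. rewrite <- psh_comp, comp_assoc, Hij, comp_id_l, psh_comp.
      reflexivity. }
    pose proof (P2 (existT _ (dc c') (psh_act M (ic c') m') : JO C M D G)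
                   (existT _ (dc c) (psh_act M (ic c) (psh_act M f m')) : JO C M D G)
                   (exist _ h' pf)) as E.
    simpl in E. rewrite <- E, Hh'. unfold h.
    repeat rewrite <- comp_assoc. rewrite Hij, comp_id_r. reflexivity.
Qed.

Theorem lemma2p6 (A : Type) (HA : regular_card A) (C : Cat) (M : Psh C)
  (Hsmall : alpha_small A M) (Hflat : alpha_flat A M) : cauchy M.
Proof.
  intros J Dg.
  destruct (retract_exists A HA C M Hsmall Hflat) as (c0 & m0 & s & Hret & Hnat).
  exact (pres_retract C M c0 m0 s Hret Hnat J Dg).
Qed.
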